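(* Let $S$ be a right simple semigroup with no idempotent, let $a\in S$, and let $A=S^1a$. Then $A\setminus\{a\}=Sa$, the $\mathcal{R}$-classes of the semigroup $A$ are exactly $\{a\}$ and $Sa$, and $\mathrm{H}_{\mathcal{R}}(A)=2$.
   Context: A semigroup is right simple if it has no proper right ideals. $S^1$ denotes $S$ with an identity adjoined. For a semigroup $M$, Green's preorder: $u\leq_{\mathcal{R}} v$ iff $uM^1\subseteq vM^1$; $\mathcal{R}$ is the associated equivalence; the $\mathcal{R}$-height $\mathrm{H}_{\mathcal{R}}(M)$ is the supremum of the cardinalities of chains in the poset of $\mathcal{R}$-classes. Here $\mathcal{R}$ and $\mathrm{H}_{\mathcal{R}}$ are taken in the semigroup $A$ itself. *)

(* Defs.v *)
From mathcomp Require Import all_boot.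
From mathcomp Require Import boolp classical_sets.
From Stdlib Require Import List.

Set Implicit Arguments. Unset Strict Implicit. Unset Printing Implicit Defensive.
Local Open Scope classical_set_scope.

Definition associative_op (S : Type) (mul : S -> S -> S) :=
  forall x y z, mul x (mul y z) = mul (mul x y) z.

Definition right_ideal (S : Type) (mul : S -> S -> S) (I : set S) :=
  I !=set0 /\ forall x s, I x -> I (mul x s).

Definition right_simple (S : Type) (mul : S -> S -> S) :=
  forall I : set S, right_ideal mul I -> I = [set: S].

Definition has_no_idempotent (S : Type) (mul : S -> S -> S) :=
  forall e : S, mul e e <> e.

Definition left_mult_set (S : Type) (mul : S -> S -> S) (a : S) : set S :=
  [set mul s a | s in [set: S]].
Definition left_mult_set1 (S : Type) (mul : S -> S -> S) (a : S) : set S :=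
  [set a] `|` left_mult_set mul a.

Definition rA1 (S : Type) (mul : S -> S -> S) (A : set S) (u : S) : set S :=
  [set u] `|` [set mul u w | w in A].

(* Green's R-preorder in the semigroup A: u <=_R v iff u A^1 ⊆ v A^1. *)
Definition leR (S : Type) (mul : S -> S -> S) (A : set S) (u v : S) : Prop :=
  rA1 mul A u `<=` rA1 mul A v.

Definition Rrel (S : Type) (mul : S -> S -> S) (A : set S) (u v : S) : Prop :=
  leR mul A u v /\ leR mul A v u.

Definition Rclass (S : Type) (mul : S -> S -> S) (A : set S) (u : S) : set S :=
  [set x | A x /\ Rrel mul A x u].

Definition is_Rclass (S : Type) (mul : S -> S -> S) (A : set S) (C : set S) : Prop :=
  exists2 u, A u & C = Rclass mul A u.

Definition leRclass (S : Type) (mul : S -> S -> S) (A : set S) (C D : set S) : Prop :=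
  exists u v, [/\ A u, A v, C = Rclass mul A u, D = Rclass mul A v & leR mul A u v].

Definition Rchain (S : Type) (mul : S -> S -> S) (A : set S) (s : list (set S)) : Prop :=
  [/\ NoDup s, (forall C, In C s -> is_Rclass mul A C) &
      (forall C D, In C s -> In D s -> leRclass mul A C D \/ leRclass mul A D C)].

(* H_R(A) = n (n finite): the supremum of the cardinalities of chains of
   R-classes is n, i.e. some chain has n elements and every (finite) chain has
   at most n elements (an infinite chain would contain arbitrarily long finite
   chains). *)
Definition R_height_eq (S : Type) (mul : S -> S -> S) (A : set S) (n : nat) : Prop :=
  (exists s, Rchain mul A s /\ length s = n) /\
  (forall s, Rchain mul A s -> (length s <= n)%N).

(* Main.v *)
Require Import Defs.
From mathcomp Require Import all_boot.
From mathcomp Require Import boolp classical_sets.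
From Stdlib Require Import List.
Local Open Scope classical_set_scope.
Set Implicit Arguments.

Lemma surjL (S : Type) (mul : S -> S -> S) (assoc : associative_op mul)
  (rs : right_simple mul) x y : exists z, mul x z = y.
Proof.
have E : [set mul x z | z in [set: S]] = [set: S].
  apply: rs; split; first by exists (mul x x); exists x.
  by move=> _ s [z _ <-]; exists (mul z s) => //; rewrite assoc.
have : [set mul x z | z in [set: S]] y by rewrite E.
by case=> z _ <-; exists z.
Qed.

Lemma notfix (S : Type) (mul : S -> S -> S) (assoc : associative_op mul)
  (rs : right_simple mul) (noid : has_no_idempotent mul) a s : mul s a <> a.
Proof.
move=> H.
have [e He] := surjL assoc rs s s.
have [t Ht] := surjL assoc rs a e.
have Hse : mul s e = e by rewrite -Ht assoc H.
apply: (noid e); by rewrite -{1}Hse He.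
Qed.


Lemma Amul (S : Type) (mul : S -> S -> S) (assoc : associative_op mul) a x y :
  left_mult_set1 mul a y -> left_mult_set mul a (mul x y).
Proof.
case=> [->|[t _ <-]]; first by exists x.
by exists (mul x t) => //; rewrite assoc.
Qed.

Lemma leR_mem (S : Type) (mul : S -> S -> S) (assoc : associative_op mul) a u v :
  rA1 mul (left_mult_set1 mul a) u v -> leR mul (left_mult_set1 mul a) v u.
Proof.
case=> [->|[w Aw <-]] //.
move=> x [->|[w' Aw' <-]]; first by right; exists w.
right; exists (mul w w'); last by rewrite assoc.
by right; apply: Amul.
Qed.

Lemma leR_refl (S : Type) (mul : S -> S -> S) B u : leR mul B u u.
Proof. by []. Qed.

Lemma Sa_rA1 (S : Type) (mul : S -> S -> S) (assoc : associative_op mul)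
  (rs : right_simple mul) a u v :
  left_mult_set mul a u -> left_mult_set mul a v -> rA1 mul (left_mult_set1 mul a) u v.
Proof.
case=> s _ <-; case=> t _ <-.
have [x Hx] := surjL assoc rs (mul s a) t.
right; exists (mul x a); first by right; exists x.
by rewrite assoc Hx.
Qed.

Lemma a_not_rA1 (S : Type) (mul : S -> S -> S) (assoc : associative_op mul)
  (rs : right_simple mul) (noid : has_no_idempotent mul) a u :
  left_mult_set mul a u -> ~ rA1 mul (left_mult_set1 mul a) u a.
Proof.
move=> Su [E|[w Aw E]].
  by case: Su => s _ Hs; apply: (@notfix _ _ assoc rs noid a s); rewrite Hs -E.
have [s _ Hs] := Amul assoc u Aw.
by apply: (@notfix _ _ assoc rs noid a s); rewrite Hs.
Qed.

Lemma Rclass_a (S : Type) (mul : S -> S -> S) (assoc : associative_op mul)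
  (rs : right_simple mul) (noid : has_no_idempotent mul) a :
  Rclass mul (left_mult_set1 mul a) a = [set a].
Proof.
apply/seteqP; split => x.
  case=> [[->|Sx] [_ H]] //.
  exfalso; apply: (a_not_rA1 assoc rs noid Sx); apply: H; by left.
move=> -> /=; split; first by left.
by split.
Qed.

Lemma Rclass_Sa (S : Type) (mul : S -> S -> S) (assoc : associative_op mul)
  (rs : right_simple mul) (noid : has_no_idempotent mul) a u :
  left_mult_set mul a u ->
  Rclass mul (left_mult_set1 mul a) u = left_mult_set mul a.
Proof.
move=> Su; apply/seteqP; split => x.
  case=> [[->|Sx] [H _]] //.
  exfalso; apply: (a_not_rA1 assoc rs noid Su); apply: H; by left.
move=> Sx; split; first by right.
by split; apply: (leR_mem assoc); apply: (Sa_rA1 assoc rs).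
Qed.

Lemma len2 (T : Type) (X Y : T) s :
  NoDup s -> (forall C, In C s -> C = X \/ C = Y) -> (length s <= 2)%N.
Proof.
case: s => [|c1 [|c2 [|c3 s]]] //= ND H.
inversion ND as [|? ? N1 ND2]; subst.
inversion ND2 as [|? ? N2 _]; subst.
have [E1|E1] := H c1 (or_introl erefl);
have [E2|E2] := H c2 (or_intror (or_introl erefl));
have [E3|E3] := H c3 (or_intror (or_intror (or_introl erefl))); subst;
exfalso; first [apply N1; simpl; tauto | apply N2; simpl; tauto].
Qed.

Theorem proposition4p7 (S : Type) (mul : S -> S -> S)
  (assoc : associative_op mul) (rs : right_simple mul)
  (noid : has_no_idempotent mul) (a : S) :
  let A := left_mult_set1 mul a in
  [/\ A `\ a = left_mult_set mul a,
      (forall C : set S, is_Rclass mul A C <-> (C = [set a] \/ C = left_mult_set mul a))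
    & R_height_eq mul A 2].
Proof.
move=> A.
have Saa : left_mult_set mul a (mul a a) by exists a.
have naS : ~ left_mult_set mul a a.
  by case=> s _; apply: notfix.
split.
- apply/seteqP; split => x.
    by case=> [[->|//] /= H]; exfalso; apply: H.
  by move=> Sx; split; [right | move=> /= E; apply: naS; move: Sx; rewrite E].
- move=> C; split.
    case=> u [->|Su] ->; first by left; apply: (Rclass_a assoc rs noid).
    by right; apply: (Rclass_Sa assoc rs noid).
  case=> ->.
    by exists a; [left | rewrite Rclass_a].
  by exists (mul a a); [right | rewrite (Rclass_Sa assoc rs noid Saa)].
- have Ra := Rclass_a assoc rs noid a.
  have RS := Rclass_Sa assoc rs noid Saa.
  split.
    exists ([set a] :: left_mult_set mul a :: nil); split => //.
    split.
    + constructor; last by constructor; [case|constructor].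
      case=> // E; apply: naS; rewrite E; done.
    + move=> C [<-|[<-|[]]].
        by exists a; [left|].
      by exists (mul a a); [right|].
    + have l1 : leRclass mul A [set a] [set a].
        by exists a, a; split => //; left.
      have l2 : leRclass mul A (left_mult_set mul a) (left_mult_set mul a).
        by exists (mul a a), (mul a a); split => //; right.
      have l3 : leRclass mul A (left_mult_set mul a) [set a].
        exists (mul a a), a; split => //; [by right|by left|].
        rewrite /A; apply: (leR_mem assoc); right; exists a => //; by left.
      move=> C D HC HD; case: HC => [HC|[HC|[]]]; case: HD => [HD|[HD|[]]]; subst C D; auto.
  move=> s [ND H _]; apply: (len2 (X := [set a]) (Y := left_mult_set mul a) ND).
  move=> C /H [u [->|Su] ->]; first by left.
  by right; apply: Rclass_Sa.
Qed.
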